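(* The map $\rho:\mathrm{eval}_{-1}(\mathcal{B})\to\mathrm{GL}(2,\mathbb{Z})$ is an injective group homomorphism satisfying $\det\rho(B)=\det B$ for all $B\in\mathrm{eval}_{-1}(\mathcal{B})$.
   Context: For a matrix $A$ with Laurent polynomial entries, $\overline{A}$ denotes the matrix obtained by substituting $t\mapsto t^{-1}$ in every entry. Let $J_3=\begin{pmatrix}1&-t^{-1}&-t^{-1}\\-t&1&-t^{-1}\\-t&-t&1\end{pmatrix}$, $v=(t,t^2,t^3)$ (a row vector) and $\vec{1}=(1,1,1)^T$. The formal Burau group is $\mathcal{B}=\{A\in\mathrm{GL}(3,\mathbb{Z}[t,t^{-1}]) : vA=v,\ A\vec 1=\vec 1,\ \overline{A}J_3A^T=J_3\}$. $\mathrm{eval}_{-1}:\mathcal{B}\to\mathrm{GL}(3,\mathbb{Z})$ is evaluation of all entries at $t=-1$. For $B=(B_{ij})\in\mathrm{eval}_{-1}(\mathcal{B})$, $\rho(B)=\begin{pmatrix}1-B_{13}&1-B_{11}\\1-B_{33}&1-B_{31}\end{pmatrix}$. *)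

(* Defs.v *)
From HB Require Import structures.
From mathcomp Require Import all_boot all_order all_algebra.
From mathcomp Require Import generic_quotient fraction.
Set Implicit Arguments. Unset Strict Implicit. Unset Printing Implicit Defensive.
Import GRing.Theory.
Local Open Scope ring_scope.

(* The field of rational functions Q(t) = Frac(Z[t]); the Laurent polynomial
   ring Z[t,t^-1] is realised as the subring of elements p / t^n. *)
Definition F := {fraction {poly int}}.

Definition tF : F := @tofrac _ 'X.

Definition laurent (x : F) : Prop :=
  exists (n : nat) (p : {poly int}), x = @tofrac _ p / tF ^+ n.

Definition evalF (p : {poly int}) (y : F) : F := (map_poly (fun q : int => @tofrac _ (q%:P)) p).[y].

(* The involution t |-> t^-1 of Q(t) (computed on any representative a/b). *)
Definition barF (x : F) : F :=
  let r := repr x in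
  evalF (frac r).1 (tF^-1) / evalF (frac r).2 (tF^-1).

Definition barM (A : 'M[F]_3) : 'M[F]_3 := map_mx barF A.

Definition laurent_mx m n (A : 'M[F]_(m, n)) : Prop := forall i j, laurent (A i j).

Definition GL3L (A : 'M[F]_3) : Prop :=
  laurent_mx A /\ exists A' : 'M[F]_3, laurent_mx A' /\ A *m A' = 1%:M /\ A' *m A = 1%:M.

Definition J3 : 'M[F]_3 :=
  \matrix_(i < 3, j < 3)
     (if (i == j :> nat) then 1 else if (i < j)%N then - tF^-1 else - tF).

Definition vL : 'rV[F]_3 := \row_(j < 3) tF ^+ j.+1.
Definition oneL : 'cV[F]_3 := const_mx 1.

Definition formal_burau (A : 'M[F]_3) : Prop :=
  [/\ GL3L A, vL *m A = vL, A *m oneL = oneL & barM A *m J3 *m A^T = J3].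

(* evaluation at t = -1 of a Laurent polynomial matrix (relational form:
   A = P / t^n with P an integer polynomial matrix; the value is
   (-1)^n P(-1), which is independent of the representation). *)
Definition eval_m1 (A : 'M[F]_3) (B : 'M[int]_3) : Prop :=
  exists (n : nat) (P : 'M[{poly int}]_3),
    A = map_mx (fun p => @tofrac _ p / tF ^+ n) P /\
    B = map_mx (fun p => (-1) ^+ n * p.[-1]) P.

Definition evalB (B : 'M[int]_3) : Prop :=
  exists A, formal_burau A /\ eval_m1 A B.

Definition i0 : 'I_3 := @Ordinal 3 0 isT.
Definition i2 : 'I_3 := @Ordinal 3 2 isT.

Definition rho (B : 'M[int]_3) : 'M[int]_2 :=
  \matrix_(i < 2, j < 2)
    (if (i == 0 :> nat) then
       (if (j == 0 :> nat) then 1 - B i0 i2 else 1 - B i0 i0)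
     else
       (if (j == 0 :> nat) then 1 - B i2 i2 else 1 - B i2 i0)).

(* Main.v *)
Require Import Defs.
From HB Require Import structures.
From mathcomp Require Import all_boot all_order all_algebra.
From mathcomp Require Import generic_quotient fraction.
From mathcomp Require Import ring lra.
Import GRing.Theory.
Local Open Scope ring_scope.

Notation tof := (@tofrac {poly int}).
Notation hm := (horner_eval (-1 : int)).

Lemma tF_neq0 : tF != 0.
Proof. by rewrite /tF tofrac_eq0 polyX_eq0. Qed.

Lemma tFX n : tF ^+ n = tof 'X^n.
Proof. by rewrite /tF rmorphXn. Qed.

Lemma map_tof_inj m k (X Y : 'M[{poly int}]_(m, k)) : map_mx tof X = map_mx tof Y -> X = Y.
Proof.
move=> H; apply/matrixP => i j; have := congr1 (fun M : 'M[F]_(m,k) => M i j) H.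
by rewrite !mxE => /eqP; rewrite tofrac_eq => /eqP.
Qed.

Lemma sign_sq n : (-1 : int) ^+ n * (-1) ^+ n = 1.
Proof. by rewrite -exprMn mulrNN mulr1 expr1n. Qed.

Lemma map_tofZ m k (p : {poly int}) (M : 'M[{poly int}]_(m, k)) :
  map_mx tof (p *: M) = tof p *: map_mx tof M.
Proof. by apply/matrixP => i j; rewrite !mxE rmorphM. Qed.

Lemma map_hmZ m k (p : {poly int}) (M : 'M[{poly int}]_(m, k)) :
  map_mx hm (p *: M) = hm p *: map_mx hm M.
Proof. by apply/matrixP => i j; rewrite !mxE /= !horner_evalE hornerM. Qed.

Lemma keyeq m k l (X : 'M[{poly int}]_(m,k)) (Y : 'M_(k,l)) (Z : 'M_(m,l)) a b :
  ((tF^+a)^-1 *: map_mx tof X) *m ((tF^+b)^-1 *: map_mx tof Y) = map_mx tof Z ->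
  ((-1)^+a *: map_mx hm X) *m ((-1)^+b *: map_mx hm Y) = map_mx hm Z.
Proof.
move=> H.
have E : X *m Y = 'X^(a + b) *: Z.
  apply: map_tof_inj; rewrite map_mxM map_tofZ -H -scalemxAr -scalemxAl scalerA.
  rewrite -tFX scalerA -invfM -exprD (addnC b a) mulfV ?scale1r //.
  by rewrite expf_neq0 // tF_neq0.
rewrite -scalemxAr -scalemxAl scalerA -map_mxM E map_hmZ scalerA /= horner_evalE hornerXn.
by rewrite -exprD addnC sign_sq scale1r. Qed.
Arguments keyeq {m k l X Y Z a b}.
Lemma laurent_common (A' : 'M[F]_3) : laurent_mx A' ->
  exists N (Q : 'M[{poly int}]_3), A' = (tF ^+ N)^-1 *: map_mx tof Q.
Proof.
move=> HL.
have : forall ij : 'I_3 * 'I_3, exists np : nat * {poly int},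
    A' ij.1 ij.2 = tof np.2 / tF ^+ np.1.
  by case=> i j; have [n [p ->]] := HL i j; exists (n, p).
case/fin_all_exists => f Hf.
pose N := (\max_(ij : 'I_3 * 'I_3) (f ij).1)%N.
exists N, (\matrix_(i, j) ('X^(N - (f (i, j)).1) * (f (i, j)).2)).
apply/matrixP => i j; rewrite !mxE (Hf (i, j)) /=.
have le : ((f (i, j)).1 <= N)%N by exact: (@leq_bigmax _ (fun ij : 'I_3 * 'I_3 => (f ij).1) (i, j)).
rewrite rmorphM /= -tFX.
move: le; set k := (f (i, j)).1; set q := tofrac _ => le.
have HN : tF ^+ N = tF ^+ (N - k) * tF ^+ k by rewrite -exprD subnK.
rewrite HN; move: (N - k)%N => d.
have h1 := tF_neq0.
have h2 : tF ^+ d != 0 by rewrite expf_neq0.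
have h3 : tF ^+ k != 0 by rewrite expf_neq0.
rewrite invfM (mulrC (tF ^- d)) -mulrA (mulrA (tF ^- d)) (mulVf h2) mul1r; apply: mulrC. Qed.
Ltac natify M :=
  let N := fresh "N" in let HM := fresh "HM" in
  pose N := fun i j : nat => M (inord i) (inord j);
  assert (HM : forall i j, M i j = N i j) by (move=> i j; unfold N; rewrite !inord_val; reflexivity);
  rewrite ?HM /=; clearbody N; clear HM.


Lemma det2 (R : comNzRingType) (M : 'M[R]_2) : \det M = M 0 0 * M 1 1 - M 0 1 * M 1 0.
Proof.
rewrite (expand_det_row _ ord0) !big_ord_recl big_ord0 /cofactor !det_mx11 !mxE /=.
natify M. ring.
Qed.

Lemma det3 (R : comNzRingType) (M : 'M[R]_3) : \det M =
  M 0 0 * (M 1 1 * M 2 2 - M 1 2 * M 2 1) - M 0 1 * (M 1 0 * M 2 2 - M 1 2 * M 2 0)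
  + M 0 2 * (M 1 0 * M 2 1 - M 1 1 * M 2 0).
Proof.
rewrite (expand_det_row _ ord0) !big_ord_recl big_ord0 /cofactor !det2 !mxE /=.
natify M. ring.
Qed.

Definition mk (a b c d : int) : 'M[int]_3 :=
  \matrix_(i < 3, j < 3) nth 0 (nth [::] [:: [:: a; 1-a-b; b]; [:: a+c-1; 3-a-b-c-d; b+d-1]; [:: c; 1-c-d; d]] i) j.

Definition wv : 'rV[int]_3 := \row_(j < 3) (-1) ^+ j.+1.

Lemma shape (B : 'M[int]_3) : B *m (const_mx 1 : 'cV[int]_3) = const_mx 1 -> wv *m B = wv ->
  exists a b c d, B = mk a b c d.
Proof.
move=> H1 H2.
have r0 := congr1 (fun M : 'cV[int]_3 => M 0 0) H1.
have r2 := congr1 (fun M : 'cV[int]_3 => M 2 0) H1.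
have c0 := congr1 (fun M : 'rV[int]_3 => M 0 0) H2.
have c1 := congr1 (fun M : 'rV[int]_3 => M 0 1) H2.
have c2 := congr1 (fun M : 'rV[int]_3 => M 0 2) H2.
move: r0 r2 c0 c1 c2; rewrite !mxE !big_ord_recl !big_ord0 !mxE /= /bump /=.
rewrite !exprS !expr0 !mulr1 !mulN1r ?opprK ?mul1r ?mulN1r.
pose N := fun i j : nat => B (inord i) (inord j).
have HM : forall i j, B i j = N i j by move=> i j; rewrite /N !inord_val.
rewrite !HM /= => r0 r2 c0 c1 c2.
exists (N 0 0)%N, (N 0 2)%N, (N 2 0)%N, (N 2 2)%N.
apply/matrixP => i j; rewrite HM !mxE.
case: i => [[|[|[|?]]] ?] //; case: j => [[|[|[|?]]] ?] //=; lra.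
Qed.

Lemma rho_mk a b c d : rho (mk a b c d) = \matrix_(i < 2, j < 2)
   (if (i == 0 :> nat) then (if (j == 0 :> nat) then 1 - b else 1 - a)
     else (if (j == 0 :> nat) then 1 - d else 1 - c)).
Proof. by apply/matrixP => i j; rewrite !mxE. Qed.

Lemma hom a b c d a' b' c' d' : rho (mk a b c d *m mk a' b' c' d') = rho (mk a b c d) *m rho (mk a' b' c' d').
Proof.
apply/matrixP => i j; rewrite !mxE !big_ord_recl !big_ord0 !mxE /=.
case: i => [[|[|?]] ?] //; case: j => [[|[|?]] ?] //=; rewrite ?mxE /=; ring.
Qed.

Definition vP : 'rV[{poly int}]_3 := \row_(j < 3) 'X^(j.+1).
Definition oP : 'cV[{poly int}]_3 := const_mx 1.

Lemma evalB_facts B : evalB B ->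
  [/\ B *m (const_mx 1 : 'cV[int]_3) = const_mx 1, wv *m B = wv & B \in unitmx].
Proof.
case=> A [[[_ [A' [LA' [AA' _]]]] HV HO _] [n [P [HA HB]]]].
have HA2 : A = (tF^+n)^-1 *: map_mx tof P.
  by rewrite HA; apply/matrixP => i j; rewrite !mxE mulrC.
have HB2 : B = (-1)^+n *: map_mx hm P.
  by rewrite HB; apply/matrixP => i j; rewrite !mxE.
have HvL : vL = (tF^+0)^-1 *: map_mx tof vP.
  by apply/matrixP => i j; rewrite !mxE expr0 invr1 mul1r tFX.
have HvL' : vL = map_mx tof vP.
  by apply/matrixP => i j; rewrite !mxE tFX.
have HoL : oneL = (tF^+0)^-1 *: map_mx tof oP.
  by apply/matrixP => i j; rewrite !mxE expr0 invr1 mul1r rmorph1.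
have HoL' : oneL = map_mx tof oP.
  by apply/matrixP => i j; rewrite !mxE rmorph1.
split.
- have H := HO; rewrite HA2 {1}HoL HoL' in H.
  have := keyeq H; rewrite -HB2 expr0 scale1r.
  have -> : map_mx hm oP = const_mx 1 by apply/matrixP => i j; rewrite !mxE rmorph1.
  by [].
- have H := HV; rewrite HA2 {1}HvL HvL' in H.
  have := keyeq H; rewrite -HB2 expr0 scale1r.
  have -> : map_mx hm vP = wv by apply/matrixP => i j; rewrite !mxE /= horner_evalE hornerXn.
  by [].
- have [N [Q HQ]] := laurent_common _ LA'.
  have H := AA'; rewrite HA2 HQ -(map_mx1 tof) in H.
  have := keyeq H; rewrite -HB2 map_mx1 => /mulmx1_unit [].
  by [].
Qed.

Lemma det_mk a b c d : \det (rho (mk a b c d)) = \det (mk a b c d).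
Proof. rewrite det2 det3 !mxE /=. ring. Qed.

Lemma inj_mk a b c d a' b' c' d' : rho (mk a b c d) = rho (mk a' b' c' d') ->
  mk a b c d = mk a' b' c' d'.
Proof.
move/matrixP => H.
have e1 := H 0 0; have e2 := H 0 1; have e3 := H 1 0; have e4 := H 1 1.
rewrite !mxE /= in e1 e2 e3 e4.
have -> : a = a' by lra.
have -> : b = b' by lra.
have -> : c = c' by lra.
have -> : d = d' by lra.
by [].
Qed.

Theorem lemma3p8 :
  (forall B : 'M[int]_3, evalB B -> rho B \in unitmx) /\
  (forall B1 B2 : 'M[int]_3, evalB B1 -> evalB B2 ->
     rho (B1 *m B2) = rho B1 *m rho B2) /\
  (forall B1 B2 : 'M[int]_3, evalB B1 -> evalB B2 -> rho B1 = rho B2 -> B1 = B2) /\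
  (forall B : 'M[int]_3, evalB B -> \det (rho B) = \det B).
Proof.
split; [|split; [|split]].
- move=> B /evalB_facts [H1 H2 HU]; have [a [b [c [d E]]]] := shape _ H1 H2.
  by rewrite unitmxE E det_mk -E -unitmxE.
- move=> B1 B2 /evalB_facts [H1 H2 _] /evalB_facts [H3 H4 _].
  have [a [b [c [d ->]]]] := shape _ H1 H2; have [a' [b' [c' [d' ->]]]] := shape _ H3 H4.
  exact: hom.
- move=> B1 B2 /evalB_facts [H1 H2 _] /evalB_facts [H3 H4 _].
  have [a [b [c [d ->]]]] := shape _ H1 H2; have [a' [b' [c' [d' ->]]]] := shape _ H3 H4.
  exact: inj_mk.
- move=> B /evalB_facts [H1 H2 _]; have [a [b [c [d ->]]]] := shape _ H1 H2.
  exact: det_mk.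
Qed.
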